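(* Let $G=(V,E)$ be a finite simple graph with $|V|\ge1$ and minimum degree $\delta(G)\ge1$, whose vertices operate independently, vertex $v$ with probability $p_v$, and let $q_v=1-p_v$, $\mathbf{p}=(p_v)_{v\in V}$. Then \[ \operatorname{DRel}(G,\mathbf{p})=\sum_{\substack{J\subseteq V\\ |J|\le|V|-\delta(G)}}(-1)^{|J|}\prod_{v\in N_G[J]}q_v+(-1)^{|V|-\delta(G)+1}\binom{|V|-1}{\delta(G)-1}\prod_{v\in V}q_v. \]
   Context: $\operatorname{DRel}(G,\mathbf{p})$ is the probability that the set of operating vertices is a dominating set of $G$ (every vertex not in the set is adjacent to a vertex in it); edges never fail. $N_G[J]$ is the closed neighbourhood of $J$ (vertices in $J$ or adjacent to a vertex of $J$). $\delta(G)$ is the minimum degree of $G$. *)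

(* Defs.v *)
From HB Require Import structures.
From mathcomp Require Import all_boot all_order all_algebra.
Set Implicit Arguments. Unset Strict Implicit. Unset Printing Implicit Defensive.
Import Order.TTheory GRing.Theory Num.Theory.
Local Open Scope ring_scope.

Definition simple_graph (T : finType) (e : rel T) : Prop :=
  symmetric e /\ irreflexive e.

Definition nbhd (T : finType) (e : rel T) (v : T) : {set T} := [set u | e v u].
Definition deg (T : finType) (e : rel T) (v : T) : nat := #|nbhd e v|.

(* minimum degree delta(G) (the default #|T| is never attained when T is
   nonempty, since deg v <= #|T| - 1 for a loopless graph) *)
Definition mindeg (T : finType) (e : rel T) : nat :=
  \big[minn/#|T|]_(v : T) deg e v.

Definition closed_nbhd (T : finType) (e : rel T) (J : {set T}) : {set T} :=
  [set u | (u \in J) || [exists w in J, e w u]].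

Definition dominating (T : finType) (e : rel T) (S : {set T}) : bool :=
  [forall v, (v \in S) || [exists w in S, e w v]].

Definition DRel (R : pzRingType) (T : finType) (e : rel T) (p : T -> R) : R :=
  \sum_(S : {set T} | dominating e S)
     (\prod_(v in S) p v) * (\prod_(v in ~: S) (1 - p v)).

(* Main.v *)
Require Import Defs.
From HB Require Import structures.
From mathcomp Require Import all_boot all_order all_algebra.
From mathcomp Require Import ring zify.
Import Order.TTheory GRing.Theory Num.Theory.
Local Open Scope ring_scope.

Section Aux.
Variables (R : comPzRingType) (T : finType).

Lemma expand (F G : T -> R) :
  \prod_i (F i + G i) = \sum_(J : {set T}) \prod_(i in J) F i * \prod_(i in ~: J) G i.
Proof.
rewrite bigA_distr; apply: eq_bigr => J _.
rewrite (bigID (mem J)) /=; congr (_ * _).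
  by apply: eq_bigr => i ->.
by apply: eq_big => [i|i /negbTE ->]; rewrite ?in_setC.
Qed.

Lemma sub_sum (p : T -> R) (B : {set T}) :
  \sum_(S : {set T} | S \subset B) (\prod_(v in S) p v * \prod_(v in ~: S) (1 - p v))
  = \prod_(v in ~: B) (1 - p v).
Proof.
have := expand (fun i => if i \in B then p i else 0) (fun i => 1 - p i).
rewrite (bigID (mem B)) /= => E.
have -> : \prod_(v in ~: B) (1 - p v) = \prod_(i in B) (p i + (1 - p i)) *
   \prod_(i | i \notin B) (0 + (1 - p i)).
  rewrite [X in _ = X * _]big1 ?mul1r; last by move=> i _; rewrite addrCA subrr addr0.
  by apply: eq_big => [i|i _]; rewrite ?in_setC ?add0r.
have -> : \prod_(i in B) (p i + (1 - p i)) * \prod_(i | i \notin B) (0 + (1 - p i)) =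
   \prod_(i in B) ((if i \in B then p i else 0) + (1 - p i)) *
   \prod_(i | i \notin B) ((if i \in B then p i else 0) + (1 - p i)).
  congr (_ * _); apply: eq_bigr => i; first by move=> ->.
  by move/negbTE ->.
rewrite E [RHS](bigID (fun S : {set T} => S \subset B)) /=.
rewrite [X in _ + X]big1 ?addr0; last first.
  move=> S /subsetPn [i iS iB].
  by rewrite (bigD1 i) //= (negbTE iB) mul0r mul0r.
apply: eq_bigr => S SB; congr (_ * _); apply: eq_bigr => i iS.
by rewrite (subsetP SB).
Qed.

End Aux.

Lemma dom_ind (R : comPzRingType) (T : finType) (e : rel T) (S : {set T}) :
  symmetric e ->
  (dominating e S)%:R = \sum_(J : {set T}) (-1) ^+ #|J| * (S \subset ~: closed_nbhd e J)%:R :> R.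
Proof.
move=> esym.
pose bad v := ~~ ((v \in S) || [exists w in S, e w v]).
have H1 : (dominating e S)%:R = \prod_v (- (bad v)%:R + 1) :> R.
  case: (boolP (dominating e S)) => [/forallP D | /forallPn [v Hv]].
    by rewrite big1 // => v _; rewrite /bad D /= oppr0 add0r.
  by rewrite (bigD1 v) //= /bad Hv /= addNr mul0r.
rewrite H1 expand; apply: eq_bigr => J _.
rewrite prodrN [X in _ * X]big1 ?mulr1 //; congr (_ * _).
case: (boolP (S \subset ~: closed_nbhd e J)) => H.
  rewrite big1 // => v vJ.
  have -> : bad v = true; last by [].
  apply/negP => /orP [vS|/existsP [w /andP [wS ewv]]].
    have := subsetP H v vS; rewrite in_setC inE vJ.
    by [].
  have := subsetP H w wS; rewrite in_setC inE negb_or => /andP [_ /existsPn /(_ v)].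
  by rewrite vJ esym ewv.
have [v vJ bv] : exists2 v, v \in J & bad v = false.
  case/subsetPn: H => u uS; rewrite in_setC negbK inE => /orP [uJ|/existsP [w /andP [wJ ewu]]].
    by exists u => //; rewrite /bad uS.
  exists w => //; rewrite /bad; apply/negbF/orP; right; apply/existsP; exists u.
  by rewrite uS esym.
by rewrite (bigD1 v) //= bv mul0r.
Qed.

Lemma alt_sum (R : comPzRingType) (T : finType) (m : nat) : (0 < #|T|)%N ->
  \sum_(J : {set T} | (m < #|J|)%N) (-1) ^+ #|J| = (-1) ^+ m.+1 * ('C(#|T|.-1, m))%:R :> R.
Proof.
move=> T0.
have Hsplit : forall k, \sum_(J : {set T} | (k < #|J|)%N) (-1) ^+ #|J| =
   (-1) ^+ k.+1 * ('C(#|T|, k.+1))%:R + \sum_(J : {set T} | (k.+1 < #|J|)%N) (-1) ^+ #|J| :> R.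
  move=> k; rewrite (bigID (fun J : {set T} => #|J| == k.+1)) /=; congr (_ + _).
    transitivity (\sum_(J in [set A : {set T} | #|A| == k.+1]) ((-1) ^+ k.+1 : R)).
      apply: eq_big => J; first by rewrite inE; case: eqP => [->|]; rewrite ?ltnSn ?andbF.
      by move=> /andP [_ /eqP ->].
    by rewrite sumr_const card_draws mulr_natr.
  by apply: eq_bigl => J; rewrite [RHS]ltn_neqAle eq_sym andbC.
case: #|T| T0 Hsplit (card_gt0P T0) => // [] n' _ Hsplit [v0 _] /=.
elim: m => [|m IH].
  have tot : \sum_(J : {set T}) (-1) ^+ #|J| = 0 :> R.
    transitivity (\prod_(v : T) (-1 + 1) : R); last first.
      by rewrite (bigD1 v0) //= addNr mul0r.
    rewrite expand; apply: eq_bigr => J _.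
    by rewrite prodr_const [X in _ * X]big1 ?mulr1.
  rewrite (bigD1 set0) //= cards0 expr0 in tot.
  rewrite bin0 mulr1 expr1.
  apply: (addrI 1); rewrite subrr -[RHS]tot; congr (_ + _).
  by apply: eq_bigl => J; rewrite card_gt0.
have := Hsplit m; rewrite IH binS natrD.
set H := \sum_(J | _) _ => E.
have -> : H = (-1) ^+ m.+1 * ('C(n', m))%:R - (-1) ^+ m.+1 * (('C(n', m.+1))%:R + ('C(n', m))%:R).
  by rewrite E [_ + H]addrC addrK.
by rewrite [in RHS]exprS mulN1r mulNr mulrDr opprD addrCA subrr addr0.
Qed.

Lemma mindeg_le (T : finType) (e : rel T) v : (mindeg e <= deg e v)%N.
Proof.
rewrite /mindeg.
have : v \in index_enum T by rewrite mem_index_enum.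
elim: (index_enum T) => [|a r IH]; first by [].
rewrite in_cons big_cons => /orP [/eqP <-|vr]; first exact: geq_minl.
exact: leq_trans (geq_minr _ _) (IH vr).
Qed.

Theorem corollary2 (R : realFieldType) (T : finType) (e : rel T)
  (p : T -> R) :
  simple_graph e ->
  (1 <= #|T|)%N ->
  (1 <= mindeg e)%N ->
  (forall v, 0 <= p v <= 1) ->
  DRel e p =
    \sum_(J : {set T} | (#|J| <= #|T| - mindeg e)%N)
       (-1) ^+ #|J| * \prod_(v in closed_nbhd e J) (1 - p v)
    + (-1) ^+ (#|T| - mindeg e + 1) * ('C(#|T| - 1, mindeg e - 1))%:R
        * \prod_(v : T) (1 - p v).
Proof.
move=> [esym eirr] T1 d1 _.
have [v0 _] := card_gt0P T1.
have dn : (mindeg e <= #|T|)%N.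
  have := @mindeg_le _ e v0; have := max_card (nbhd e v0); rewrite /deg; lia.
have tail : forall J : {set T}, (#|T| - mindeg e < #|J|)%N ->
    forall u, u \in closed_nbhd e J.
  move=> J HJ u; rewrite inE; apply/negPn/negP; rewrite negb_or => /andP [uJ /existsPn H].
  have sub : nbhd e u \proper ~: J.
    apply/properP; split.
      apply/subsetP => w; rewrite !inE => euw; apply/negP => wJ.
      by have := H w; rewrite wJ esym euw.
    by exists u; rewrite !inE ?eirr.
  have := proper_card sub; have := cardsC J; have := @mindeg_le _ e u.
  rewrite /deg; lia.
have step1 : DRel e p = \sum_(J : {set T}) (-1) ^+ #|J| * \prod_(v in closed_nbhd e J) (1 - p v).
  rewrite /DRel.
  transitivity (\sum_(S : {set T}) (dominating e S)%:R *
      (\prod_(v in S) p v * \prod_(v in ~: S) (1 - p v))).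
    rewrite [RHS](bigID (dominating e)) /= [X in _ = _ + X]big1 ?addr0.
      by apply: eq_bigr => S ->; rewrite mul1r.
    by move=> S /negbTE ->; rewrite mul0r.
  under eq_bigr do rewrite (dom_ind R _ _ _ esym) mulr_suml.
  rewrite exchange_big /=. apply: eq_big => // J _.
  rewrite -[in RHS](setCK (closed_nbhd e J)) -sub_sum mulr_sumr [RHS]big_mkcond /=.
  apply: eq_bigr => S _.
  by case: (S \subset _); rewrite ?mulr1 ?mulr0 ?mul0r.
rewrite step1 (bigID (fun J : {set T} => (#|J| <= #|T| - mindeg e)%N)) /=; congr (_ + _).
transitivity (\sum_(J : {set T} | (#|T| - mindeg e < #|J|)%N) (-1) ^+ #|J| * \prod_(v : T) (1 - p v)).
  apply: eq_big => J; first by rewrite ltnNge.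
  move=> HJ; congr (_ * _); apply: eq_bigl => v.
  by rewrite tail // ltnNge.
rewrite -mulr_suml alt_sum //; congr (_ * _ * _).
  by rewrite addn1.
have -> : (#|T| - mindeg e = (#|T| - 1) - (mindeg e - 1))%N by lia.
by rewrite -subn1 bin_sub //; lia.
Qed.
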